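(* Let $H:\mathbb R\times\mathbb R\times\Omega\to\mathbb R$ satisfy (H1)–(H6) described in the context. Then for every $\omega\in\Omega$, $$\tilde A(\omega)=\inf_{v\in\mathbf{Lip}}\ \sup_{y\in\mathbb R}H(Dv,y,\omega)=\sup_{y\in\mathbb R}H(0,y,\omega)<\infty.$$
   Context: $\Omega$ is a set (a probability space) and $H:\mathbb R\times\mathbb R\times\Omega\to\mathbb R$, $(p,y,\omega)\mapsto H(p,y,\omega)$. (H1) $H$ is Lipschitz in $p$ uniformly in $(y,\omega)$. (H2) There are $c_0,C_0,\gamma>0$ with $-c_0|p+\gamma|\le H(p,y,\omega)\le C_0|p+\gamma|$. (H3) $\lim_{|p|\to\infty}\inf_{(y,\omega)}H(p,y,\omega)=+\infty$. (H4) There is a modulus $w$ with $|H(p,y,\omega)-H(p,x,\omega)|\le w(|x-y|(1+|p|))$. (H5) $p\mapsto H(p,y,\omega)$ is convex. (H6) $H(p,y,\omega)\ge H(0,y,\omega)$ for all $p,y,\omega$. $\mathbf{Lip}$ denotes the set of globally Lipschitz real functions on $\mathbb R$. The stochastic flux limiter is $\tilde A(\omega)=\inf\{\mu:\ \exists v\in\mathbf{Lip}$ with $H(Dv,y,\omega)\le\mu$ in $\mathbb R$ in the viscosity sense$\}$. *)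

(* Defs.v *)
From HB Require Import structures.
From mathcomp Require Import all_boot all_order all_algebra.
From mathcomp Require Import all_classical all_reals all_analysis.
From mathcomp Require Import ess_sup_inf.
Set Implicit Arguments. Unset Strict Implicit. Unset Printing Implicit Defensive.
Import Order.TTheory GRing.Theory Num.Theory.
Import numFieldNormedType.Exports.
Local Open Scope classical_set_scope.
Local Open Scope ring_scope.

Definition Lip {R : realType} (v : R -> R) : Prop :=
  exists L : R, forall x y : R, `|v x - v y| <= L * `|x - y|.

Definition modulus {R : realType} (w : R -> R) : Prop :=
  w 0 = 0 /\ (forall r, 0 <= r -> 0 <= w r) /\
  (forall r s, 0 <= r -> r <= s -> w r <= w s) /\
  (forall e, 0 < e -> exists d, 0 < d /\ forall r, 0 <= r -> r < d -> w r < e).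

Definition C1 {R : realType} (phi : R -> R) : Prop :=
  (forall x : R, derivable phi x 1) /\ continuous (derive1 phi).

Definition visc_sub {R : realType} {Omega : Type} (H : R -> R -> Omega -> R)
  (omega : Omega) (v : R -> R) (mu : R) : Prop :=
  continuous v /\
  forall (phi : R -> R) (y0 : R), C1 phi ->
    (\forall y \near y0, v y - phi y <= v y0 - phi y0) ->
    H (derive1 phi y0) y0 omega <= mu.

(** stochastic flux limiter  A~(omega) (an extended real, inf of the empty set = +oo) *)
Definition flux_limiter {R : realType} {Omega : Type} (H : R -> R -> Omega -> R)
  (omega : Omega) : \bar R :=
  ereal_inf [set (mu%:E) | mu in [set mu : R | exists v, Lip v /\ visc_sub H omega v mu]].

(** sup_y H(Dv, y, omega) for Lipschitz v: essential supremum w.r.t. Lebesgue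
    measure of y |-> H(v'(y), y, omega) (v' exists a.e. by Rademacher) *)
Definition sup_H_Dv {R : realType} {Omega : Type} (H : R -> R -> Omega -> R)
  (omega : Omega) (v : R -> R) : \bar R :=
  ess_sup (@lebesgue_measure R) (fun y => (H (derive1 v y) y omega)%:E).

Definition inf_sup_H {R : realType} {Omega : Type} (H : R -> R -> Omega -> R)
  (omega : Omega) : \bar R :=
  ereal_inf [set sup_H_Dv H omega v | v in [set v : R -> R | Lip v]].

Definition sup_H0 {R : realType} {Omega : Type} (H : R -> R -> Omega -> R)
  (omega : Omega) : \bar R :=
  ereal_sup [set (H 0 y omega)%:E | y in [set: R]].

(* Main.v *)
Require Import Defs.
From HB Require Import structures.
From mathcomp Require Import all_boot all_order all_algebra.
From mathcomp Require Import all_classical all_reals all_analysis.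
From mathcomp Require Import lra.
From mathcomp Require Import ess_sup_inf.
Import Order.TTheory GRing.Theory Num.Theory.
Import numFieldNormedType.Exports.
Local Open Scope classical_set_scope.
Local Open Scope ring_scope.

Theorem lemma4p1 (R : realType) (Omega : Type) (H : R -> R -> Omega -> R)
  (* (H1) Lipschitz in p, uniformly in (y, omega) *)
  (H1 : exists L : R, forall (p q y : R) (omega : Omega),
          `|H p y omega - H q y omega| <= L * `|p - q|)
  (* (H2) *)
  (H2 : exists c0 C0 gamma : R, 0 < c0 /\ 0 < C0 /\ 0 < gamma /\
          forall (p y : R) (omega : Omega),
            - (c0 * `|p + gamma|) <= H p y omega /\ H p y omega <= C0 * `|p + gamma|)
  (* (H3) coercivity, uniformly in (y, omega) *)
  (H3 : forall M : R, exists r0 : R, forall (p y : R) (omega : Omega),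
          r0 <= `|p| -> M <= H p y omega)
  (* (H4) *)
  (H4 : exists w : R -> R, modulus w /\
          forall (p x y : R) (omega : Omega),
            `|H p y omega - H p x omega| <= w (`|x - y| * (1 + `|p|)))
  (* (H5) convexity in p *)
  (H5 : forall (y : R) (omega : Omega) (t p q : R), 0 <= t <= 1 ->
          H (t * p + (1 - t) * q) y omega <= t * H p y omega + (1 - t) * H q y omega)
  (* (H6) *)
  (H6 : forall (p y : R) (omega : Omega), H 0 y omega <= H p y omega) :
  forall omega : Omega,
    flux_limiter H omega = inf_sup_H H omega /\
    inf_sup_H H omega = sup_H0 H omega /\
    (sup_H0 H omega < +oo)%E.
Proof.
move=> omega.
pose h y := H 0 y omega.
have [c0 [C0 [g [c0p [C0p [gp Hb]]]]]] := H2.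
have hub y : h y <= C0 * `|g|.
  by have := (Hb 0 y omega).2; rewrite add0r.
have hcont e : 0 < e -> exists2 d, 0 < d & forall x y, `|x - y| < d -> `|h x - h y| < e.
  move=> e0; have [w [[w0 [wpos [wmon wc]]] Hw]] := H4.
  have [d [d0 Hd]] := wc e e0; exists d => // x y xy.
  apply: le_lt_trans (Hw 0 y x omega) _; rewrite normr0 addr0 mulr1.
  by apply: Hd; rewrite // distrC.
set A0 := sup_H0 H omega.
have S1 y : ((h y)%:E <= A0)%E by apply: ereal_sup_ubound; exists y.
have S2 z : (forall y, ((h y)%:E <= z)%E) -> (A0 <= z)%E.
  by move=> hz; apply: ge_ereal_sup => _ [y _ <-]; apply: hz.
have A0lt : (A0 < +oo)%E.
  by apply: (le_lt_trans (S2 (C0 * `|g|)%:E _)) => [y|]; rewrite ?lee_fin ?hub ?ltry.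
have A0fin : A0 \is a fin_num.
  rewrite fin_numE; apply/andP; split.
    by rewrite -ltNye (lt_le_trans _ (S1 0)) // ltNyr.
  by rewrite lt_eqF.
have K z : (forall y0 d, 0 < d -> exists2 y1, `|y1 - y0| < d & ((h y1)%:E <= z)%E) ->
    (A0 <= z)%E.
  move=> Hz; apply: S2 => y0.
  case: z Hz => [r| |] Hz; last 2 first.
  - by rewrite leey.
  - by have [y1 _] := Hz y0 1 ltr01; rewrite leeNy_eq.
  rewrite lee_fin; apply/ler_addgt0Pr => e e0.
  have [d d0 hd] := hcont e e0.
  have [y1 y1d] := Hz y0 d d0; rewrite lee_fin => hy1.
  move: (hd _ _ y1d) => /ltr_normlP [h1 h2]; lra.
have P1ge v : (A0 <= sup_H_Dv H omega v)%E.
  apply: K => y0 d d0.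
  have ae : \forall x \ae (@lebesgue_measure R),
      ((H (derive1 v x) x omega)%:E <= sup_H_Dv H omega v)%E.
    exact: ess_sup_ge.
  case: ae => N [mN N0 sub].
  have [//|nex] := pselect (exists2 y1, `|y1 - y0| < d & ((h y1)%:E <= sup_H_Dv H omega v)%E).
  have sub' : [set` `]y0 - d, y0 + d[] `<=` N.
    move=> x /=; rewrite in_itv /= => /andP[x1 x2]; apply: sub => /= hx.
    apply: nex; exists x; first by rewrite ltr_norml; apply/andP; split; lra.
    apply: le_trans hx; rewrite lee_fin; exact: H6.
  have mI : [set` `]y0 - d, y0 + d[] \in measurable by rewrite inE; exact: measurable_itv.
  have mN' : N \in measurable by rewrite inE.
  have := @le_measure _ _ _ (@lebesgue_measure R) _ _ mI mN' sub'.
  move=> HH.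
  have : (lebesgue_measure [set` `](y0 - d)%R, (y0 + d)%R[] <= 0)%E by rewrite -N0.
  rewrite lebesgue_measure_itv /=.
  have lt : ((y0 - d)%:E < (y0 + d)%:E)%E by rewrite lte_fin; lra.
  by rewrite lt -EFinD lee_fin => ?; exfalso; lra.
have lip0 : Lip (cst 0 : R -> R) by exists 0 => x y; rewrite subrr normr0 mul0r.
have P1 : inf_sup_H H omega = A0.
  apply/eqP; rewrite eq_le; apply/andP; split.
    apply: (@le_trans _ _ (sup_H_Dv H omega (cst 0))).
      by apply: ereal_inf_lbound; exists (cst 0).
    apply/ess_supP; apply: aeW => y; rewrite derive1_cst; exact: S1.
  by apply: le_ereal_inf_tmp => _ [v _ <-]; apply: P1ge.
have Fle : (flux_limiter H omega <= A0)%E.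
  rewrite -(fineK A0fin); apply: ereal_inf_lbound; exists (fine A0) => //.
  exists (cst 0); split => //; split; first exact: cst_continuous.
  move=> phi y0 [dphi cphi] /nbhs_ballP [e /= e0 He].
  have D0 : is_derive y0 1 phi 0.
    apply: (@derive1_at_min _ _ (y0 - e) (y0 + e)).
    - lra.
    - by move=> t _; apply: dphi.
    - rewrite in_itv /=; apply/andP; split; lra.
    move=> t; rewrite in_itv /= => /andP[t1 t2].
    have : ball y0 e t.
      by rewrite /ball /= ltr_norml; apply/andP; split; lra.
    by move/He => /=; lra.
  rewrite derive1E (@derive_val _ _ _ _ _ _ _ D0) -lee_fin fineK //; exact: S1.
have Fge : (A0 <= flux_limiter H omega)%E.
  apply: le_ereal_inf_tmp => _ [mu [v [[L HL] [vc Hv]]] <-].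
  apply: K => y0 d d0.
  pose L' := `|L| + 1.
  have L'0 : 0 < L' by rewrite /L'; have := normr_ge0 L; lra.
  pose Kc := L' / d.
  have KcE : Kc * d = L' by rewrite /Kc divfK // gt_eqF.
  have Kc0 : 0 < Kc by rewrite /Kc divr_gt0.
  pose phi := fun y : R => Kc * ((y - y0) * (y - y0)).
  have Dphi (x : R) : is_derive x 1 phi (Kc * (2 * (x - y0))).
    by rewrite /phi; apply: is_derive_eq; rewrite subr0 /GRing.scale /=; lra.
  have Dphi' (x : R) : is_derive x 1 (fun y : R => Kc * (2 * (y - y0))) (Kc * 2).
    by rewrite /phi; apply: is_derive_eq; rewrite subr0 /GRing.scale /=; lra.
  have phi'E : derive1 phi = (fun y : R => Kc * (2 * (y - y0))).
    by apply: funext => x; rewrite derive1E (@derive_val _ _ _ _ _ _ _ (Dphi x)).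
  have C1phi : C1 phi.
    split; first by move=> x; exact: ex_derive.
    rewrite phi'E => x; apply: differentiable_continuous.
    by apply/derivable1_diffP; exact: ex_derive.
  have phic : continuous phi.
    by move=> x; apply: differentiable_continuous; apply/derivable1_diffP; exact: ex_derive.
  pose gg := fun y => v y - phi y.
  have [c cI cmax] : exists2 c, c \in `[y0 - d, y0 + d] & forall t, t \in `[y0 - d, y0 + d] -> gg t <= gg c.
    apply: EVT_max; first lra.
    apply: continuous_subspaceT; move=> x; exact: (@continuousB _ _ _ v phi x (vc x) (phic x)).
  move: cI; rewrite in_itv /= => /andP[c1 c2].
  have gy0 : gg y0 <= gg c by apply: cmax; rewrite in_itv /=; apply/andP; split; lra.
  have HLc : `|v c - v y0| <= `|L| * `|c - y0|.
    apply: (le_trans (HL _ _)); apply: ler_wpM2r; [exact: normr_ge0 | exact: ler_norm].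
  have cd : `|c - y0| < d.
    rewrite ltNge; apply/negP => dc.
    have cd' : `|c - y0| = d by apply/eqP; rewrite eq_le dc ler_norml; apply/andP; split; lra.
    have sq : (c - y0) * (c - y0) = d * d.
      by rewrite -cd' -normrM ger0_norm // -expr2 sqr_ge0.
    move: gy0; rewrite /gg /phi sq subrr mulr0 mulrA KcE => gy0.
    rewrite cd' in HLc; move: HLc => /ler_normlP [h1 h2].
    rewrite /L' in gy0; nra.
  exists c => //.
  apply: le_trans (H6 (derive1 phi c) c omega) _.
  apply: Hv => //.
  apply/nbhs_ballP; exists (d - `|c - y0|); first by rewrite /= subr_gt0.
  move=> t; rewrite /ball /= => ct; apply: cmax.
  have n1 := ler_norm (c - y0).
  have n2 := ler_norm (- (c - y0)); rewrite normrN in n2.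
  move: ct => /ltr_normlP [? ?].
  rewrite in_itv /=; apply/andP; split; lra.
split; last by split.
rewrite P1; apply/eqP; rewrite eq_le Fle Fge //.
Qed.
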